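(* Let $G$ be a graph with a linear order $<$ on $V(G)$ satisfying the X-property, let $s<t$ be vertices with $d^*:=\operatorname{dist}(s,t)<\infty$, and let $d$ be an integer. Each of the following conditions implies $d^*\le d$: (i) $\beta_s(\sigma)=\beta_t(\tau)$ for some nonnegative integers $\sigma,\tau$ with $\sigma+\tau=d$; (ii) $G$ contains an edge between $\alpha_s(\sigma)$ and $\alpha_t(\tau)$ for some nonnegative integers $\sigma,\tau$ with $\sigma+\tau=d-1$; (iii) there are nonnegative integers $\sigma,\tau$ with $\sigma+\tau=d-3$ and vertices $v\in\{\alpha_s(\sigma),\beta_s(\sigma)\}$, $w\in\{\alpha_t(\tau),\beta_t(\tau)\}$ with $v<w$, $\operatorname{rhorizon}(v)\ge t$ and $\operatorname{lhorizon}(w)\le s$.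
   Context: The X-property: for all vertices $p<q<r<s$, if $\{p,r\}\in E(G)$ and $\{q,s\}\in E(G)$ then $\{p,s\}\in E(G)$. $N[v]$ is the closed neighborhood; $\operatorname{lhorizon}(v):=\min N[v]$ and $\operatorname{rhorizon}(v):=\max N[v]$ w.r.t. $<$. For an integer $k\ge 0$: $\alpha_s(k)$ (resp. $\beta_s(k)$) is the leftmost (resp. rightmost) vertex reachable from $s$ by a path of length at most $k$ using only vertices $v\le t$; $\alpha_t(k)$ (resp. $\beta_t(k)$) is the rightmost (resp. leftmost) vertex reachable from $t$ by a path of length at most $k$ using only vertices $v\ge s$. *)

(* Defs.v *)
(* Vertices of the ordered graph are 'I_n with the natural
   order on nat (every finite linearly ordered vertex set is of this form). *)
From mathcomp Require Import all_boot.
Set Implicit Arguments. Unset Strict Implicit. Unset Printing Implicit Defensive.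

Section OrderedGraph.
Variables (n : nat) (e : rel 'I_n).

Definition simple_graph : Prop := symmetric e /\ irreflexive e.

Definition X_property : Prop :=
  forall p q r s : 'I_n, p < q -> q < r -> r < s ->
    e p r -> e q s -> e p s.

Definition walk_len (k : nat) (x y : 'I_n) : Prop :=
  exists p : seq 'I_n, [/\ path e x p, last x p = y & size p = k].

Definition is_dist (x y : 'I_n) (k : nat) : Prop :=
  walk_len k x y /\ forall j, walk_len j x y -> k <= j.

Definition reach_within (P : pred 'I_n) (k : nat) (x y : 'I_n) : bool :=
  [exists m : 'I_k.+1, exists p : m.-tuple 'I_n,
     [&& path e x p, last x p == y & all P (x :: p)]].

Lemma reach_within_refl (P : pred 'I_n) k x : P x -> reach_within P k x x.
Proof.
move=> Px; apply/existsP; exists ord0; apply/existsP; exists [tuple].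
by rewrite /= eqxx Px.
Qed.

Variables (s t : 'I_n).

Definition left_of_t : pred 'I_n := fun v => v <= t.
Definition right_of_s : pred 'I_n := fun v => s <= v.

Lemma s_ok : s <= t -> left_of_t s. Proof. by []. Qed.

Definition alpha_s (k : nat) : 'I_n :=
  [arg min_(v < s | reach_within left_of_t k s v) (v : nat)].
Definition beta_s (k : nat) : 'I_n :=
  [arg max_(v > s | reach_within left_of_t k s v) (v : nat)].
Definition alpha_t (k : nat) : 'I_n :=
  [arg max_(v > t | reach_within right_of_s k t v) (v : nat)].
Definition beta_t (k : nat) : 'I_n :=
  [arg min_(v < t | reach_within right_of_s k t v) (v : nat)].

End OrderedGraph.

Definition lhorizon n (e : rel 'I_n) (v : 'I_n) : 'I_n :=
  [arg min_(u < v | (u == v) || e v u) (u : nat)].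
Definition rhorizon n (e : rel 'I_n) (v : 'I_n) : 'I_n :=
  [arg max_(u > v | (u == v) || e v u) (u : nat)].

(* Main.v *)
Require Import Defs.
From mathcomp Require Import all_boot all_order all_algebra.
Import Order.TTheory GRing.Theory Num.Theory.
From mathcomp Require Import zify.
Set Implicit Arguments. Unset Strict Implicit. Unset Printing Implicit Defensive.

Lemma walk0 n (e : rel 'I_n) x : walk_len e 0 x x.
Proof. by exists [::]. Qed.

Lemma walk_edge n (e : rel 'I_n) x y : e x y -> walk_len e 1 x y.
Proof. by move=> h; exists [:: y]; rewrite /= h. Qed.

Lemma walk_cat n (e : rel 'I_n) i j x y z :
  walk_len e i x y -> walk_len e j y z -> walk_len e (i + j) x z.
Proof.
move=> [p [hp hl hs]] [q [hq hl' hs']]; exists (p ++ q); split.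
- by rewrite cat_path hp hl hq.
- by rewrite last_cat hl.
- by rewrite size_cat hs hs'.
Qed.

Lemma walk_rev n (e : rel 'I_n) k x y :
  symmetric e -> walk_len e k x y -> walk_len e k y x.
Proof.
move=> sym [p [hp hl hs]]; elim: p x k hp hl hs => [|z p IH] x k /=.
  by move=> _ <- <-; exact: walk0.
move=> /andP[exz hp] hl hs.
have h := IH z (size p) hp hl erefl.
rewrite -hs -addn1; apply: walk_cat h _; apply: walk_edge; by rewrite sym.
Qed.

Lemma reach_spec n (e : rel 'I_n) P k x y : reach_within e P k x y ->
  exists p, [/\ path e x p, last x p = y, size p <= k & all P (x :: p)].
Proof.
case/existsP => m /existsP [p /and3P [hp /eqP hl ha]].
by exists p; split => //; rewrite size_tuple -ltnS ltn_ord.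
Qed.

Lemma split_up n (e : rel 'I_n) (x : 'I_n) p (m : nat) :
  path e x p -> x < m -> m <= last x p ->
  exists (a c : 'I_n) i, [/\ (a < m) && (m <= c), e a c, (a \in x :: p) && (c \in x :: p),
                    walk_len e i x a & i < size p].
Proof.
elim: p x => [|y p IH] x /=.
  by move=> _ h1 h2; exfalso; lia.
move=> /andP[exy hp] hxm hml.
have sub : {subset y :: p <= x :: y :: p} by move=> z hz; rewrite in_cons hz orbT.
case: (leqP m y) => hmy.
  exists x, y, 0; split => //; [by lia|by rewrite mem_head /= in_cons mem_head orbT|exact: walk0].
have [a [c [i [h1 h3 h4 h5 h6]]]] := IH y hp hmy hml.
exists a, c, i.+1; split => //.
- by case/andP: h4 => ha hc; rewrite !sub.
- by have := walk_cat (walk_edge exy) h5; rewrite add1n.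
Qed.

Lemma split_down n (e : rel 'I_n) (x : 'I_n) p (m : nat) :
  path e x p -> m < x -> last x p <= m ->
  exists (a c : 'I_n) i, [/\ (m < a) && (c <= m), e a c, (a \in x :: p) && (c \in x :: p),
                    walk_len e i x a & i < size p].
Proof.
elim: p x => [|y p IH] x /=.
  by move=> _ h1 h2; exfalso; lia.
move=> /andP[exy hp] hxm hml.
have sub : {subset y :: p <= x :: y :: p} by move=> z hz; rewrite in_cons hz orbT.
case: (leqP y m) => hmy.
  exists x, y, 0; split => //; [by lia|by rewrite mem_head /= in_cons mem_head orbT|exact: walk0].
have [a [c [i [h1 h3 h4 h5 h6]]]] := IH y hp hmy hml.
exists a, c, i.+1; split => //.
- by case/andP: h4 => ha hc; rewrite !sub.
- by have := walk_cat (walk_edge exy) h5; rewrite add1n.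
Qed.

Lemma ord_tri n (a b : 'I_n) : [\/ a < b, a = b | b < a].
Proof.
case: (ltngtP a b) => h; [exact: Or31 | exact: Or33 | apply: Or32; exact: ord_inj].
Qed.


Theorem lemma12 (n : nat) (e : rel 'I_n) (s t : 'I_n) (dstar : nat) (d : int) :
  simple_graph e -> X_property e -> (s < t)%N -> is_dist e s t dstar ->
  ((exists sigma tau : nat, Posz (sigma + tau) = d /\
       beta_s e s t sigma = beta_t e s t tau) \/
   (exists sigma tau : nat, Posz (sigma + tau) = (d - 1)%R /\
       e (alpha_s e s t sigma) (alpha_t e s t tau)) \/
   (exists sigma tau : nat, Posz (sigma + tau) = (d - 3)%R /\
     exists v w : 'I_n,
       [/\ v = alpha_s e s t sigma \/ v = beta_s e s t sigma,
           w = alpha_t e s t tau \/ w = beta_t e s t tau,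
           (v < w)%N,
           (t <= rhorizon e v)%N &
           (lhorizon e w <= s)%N])) ->
  (Posz dstar <= d)%R.
Proof.
move=> [sym irr] X hst [_ dmin] H.
suff [j [hw hj]] : exists j, walk_len e j s t /\ (Posz j <= d)%R.
  by apply: le_trans hj; rewrite lez_nat; apply: dmin.
have Ls : left_of_t t s by rewrite /left_of_t ltnW.
have Rt : right_of_s s t by rewrite /right_of_s ltnW.
have hA k : exists p, [/\ path e s p, last s p = alpha_s e s t k, size p <= k
                        & all (left_of_t t) (s :: p)].
  by rewrite /alpha_s; case: arg_minnP => [|v hv _];
    [exact: reach_within_refl | exact: reach_spec].
have hB k : exists p, [/\ path e s p, last s p = beta_s e s t k, size p <= k
                        & all (left_of_t t) (s :: p)].
  by rewrite /beta_s; case: arg_maxnP => [|v hv _];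
    [exact: reach_within_refl | exact: reach_spec].
have hAt k : exists p, [/\ path e t p, last t p = alpha_t e s t k, size p <= k
                        & all (right_of_s s) (t :: p)].
  by rewrite /alpha_t; case: arg_maxnP => [|v hv _];
    [exact: reach_within_refl | exact: reach_spec].
have hBt k : exists p, [/\ path e t p, last t p = beta_t e s t k, size p <= k
                        & all (right_of_s s) (t :: p)].
  by rewrite /beta_t; case: arg_minnP => [|v hv _];
    [exact: reach_within_refl | exact: reach_spec].
case: H => [[sg [tu [hd heq]]] | [[sg [tu [hd he]]] | [sg [tu [hd [v [w [hv hw hvw hrt hls]]]]]]]].
- have [ps [hps hl1 hs1 _]] := hB sg.
  have [pt [hpt hl2 hs2 _]] := hBt tu.
  have w1 : walk_len e (size ps) s (beta_s e s t sg) by exists ps.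
  have w2 : walk_len e (size pt) t (beta_s e s t sg) by rewrite heq; exists pt.
  exists (size ps + size pt); split; first exact: walk_cat w1 (walk_rev sym w2).
  rewrite -hd lez_nat; exact: leq_add.
- have [ps [hps hl1 hs1 _]] := hA sg.
  have [pt [hpt hl2 hs2 _]] := hAt tu.
  have w1 : walk_len e (size ps) s (alpha_s e s t sg) by exists ps.
  have w2 : walk_len e (size pt) t (alpha_t e s t tu) by exists pt.
  exists (size ps + 1 + size pt); split.
    exact: walk_cat (walk_cat w1 (walk_edge he)) (walk_rev sym w2).
  lia.
have [ps [hps hl1 hs1 hall1]] : exists p, [/\ path e s p, last s p = v, size p <= sg
                        & all (left_of_t t) (s :: p)] by case: hv => ->.
have [pt [hpt hl2 hs2 hall2]] : exists p, [/\ path e t p, last t p = w, size p <= tu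
                        & all (right_of_s s) (t :: p)] by case: hw => ->.
have ws : walk_len e (size ps) s v by exists ps.
have wt : walk_len e (size pt) t w by exists pt.
have fin : forall x y i j k, walk_len e i s x -> walk_len e k x y -> walk_len e j t y ->
    i <= sg -> j <= tu -> k <= 3 -> exists j, walk_len e j s t /\ (Posz j <= d)%R.
  move=> x y i j k w1 w2 w3 h1 h2 h3; exists (i + k + j); split.
    exact: walk_cat (walk_cat w1 w2) (walk_rev sym w3).
  lia.
have hvt : v <= t by have := allP hall1 v; rewrite -hl1 mem_last; apply.
have hsw : s <= w by have := allP hall2 w; rewrite -hl2 mem_last; apply.
have hvr : (rhorizon e v == v) || e v (rhorizon e v).
  by rewrite /rhorizon; case: arg_maxnP => [|u hu _ //]; rewrite eqxx.
have hwl : (lhorizon e w == w) || e w (lhorizon e w).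
  by rewrite /lhorizon; case: arg_minnP => [|u hu _ //]; rewrite eqxx.
set B := rhorizon e v in hrt hvr; set C := lhorizon e w in hls hwl.
clearbody B C.
have ext : forall (x y z : 'I_n) i, walk_len e i x y -> e y z -> walk_len e i.+1 x z.
  by move=> x y z i h1 h2; have := walk_cat h1 (walk_edge h2); rewrite addn1.
case/orP: hvr => [/eqP hBB | evB].
  have vt : v = t by apply: ord_inj; move: hrt; rewrite hBB => ?; lia.
  by apply: (fin v t (size ps) 0 0) => //; [rewrite -vt; exact: walk0 | exact: walk0].
case/orP: hwl => [/eqP hCC | ewC].
  have ws' : w = s by apply: ord_inj; move: hls; rewrite hCC => ?; lia.
  apply: (fin s w 0 (size pt) 0) => //; [exact: walk0 | rewrite ws'; exact: walk0].
have eCw : e C w by rewrite sym.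
have hvB : v < B.
  case: (ord_tri v B) => h //; [by move: evB; rewrite h irr | lia].
have hCw : C < w.
  case: (ord_tri C w) => h //; [by move: eCw; rewrite h irr | lia].
have t1 : size pt <= tu := hs2.
have s1 : size ps <= sg := hs1.
case: (ord_tri C v) => hCv.
{
  case: (ord_tri B w) => hBw.
  { (* nested1: C < v < B < w *)
    case: (ord_tri t B) => htB; last first.
    { by exfalso; clear -htB hrt; lia. }
    { rewrite -htB in evB.
      by apply: (fin v t (size ps) 0 1) => //; [exact: walk_edge | exact: walk0]. }
    have hl2' : B <= last t pt by rewrite hl2 ltnW.
    have [a [c [i [/andP[h1 h1'] h2 h4 h5 h6]]]] := split_up hpt htB hl2'.
    case/andP: h4 => ha hc.
    have hsa : s <= a := allP hall2 a ha.
    have wtc := ext _ _ _ _ h5 h2.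
    have itu : i.+1 <= tu by clear -h6 t1; lia.
    case: (ord_tri B c) => hBc; last first.
    { by exfalso; clear -hBc h1'; lia. }
    { rewrite -hBc in wtc.
      by apply: (fin v B (size ps) i.+1 1) => //; exact: walk_edge. }
    case: (ord_tri a v) => hav; last first.
    { have evc : e v c by apply: (X v a B c).
      by apply: (fin v c (size ps) i.+1 1) => //; exact: walk_edge. }
    { rewrite hav in h2.
      by apply: (fin v c (size ps) i.+1 1) => //; exact: walk_edge. }
    case: (ord_tri s a) => hsa'; last first.
    { by exfalso; clear -hsa' hsa; lia. }
    { rewrite -hsa' in h2.
      by apply: (fin s c 0 i.+1 1) => //; [exact: walk0 | exact: walk_edge]. }
    have hl1' : a <= last s ps by rewrite hl1 ltnW.
    have [a2 [c2 [i2 [/andP[k1 k1'] k2 k4 k5 k6]]]] := split_up hps hsa' hl1'.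
    case/andP: k4 => ka kc.
    have hc2t : c2 <= t := allP hall1 c2 kc.
    have isg : i2 < sg by clear -k6 s1; lia.
    case: (ord_tri a c2) => hac2.
    { have hc2c : c2 < c by clear -hc2t htB hBc; lia.
      have ea2c : e a2 c by apply: (X a2 a c2 c).
      by apply: (fin a2 c i2 i.+1 1) => //; [exact: walk_edge | exact: ltnW]. }
    { rewrite -hac2 in k2.
      by apply: (fin a c i2.+1 i.+1 1) => //; [exact: ext k5 k2 | exact: walk_edge]. }
    { by exfalso; clear -hac2 k1'; lia. }
  }
  { rewrite hBw in evB.
    by apply: (fin v w (size ps) (size pt) 1) => //; exact: walk_edge. }
  { (* C < v < w < B : crossing *)
    have eCB : e C B by apply: (X C v w B) => //; lia.
    apply: (fin v w (size ps) (size pt) 3) => //.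
    have eBC : e B C by rewrite sym.
    exact: (walk_cat (walk_cat (walk_edge evB) (walk_edge eBC)) (walk_edge eCw)). } }
{ rewrite hCv in eCw.
  by apply: (fin v w (size ps) (size pt) 1) => //; exact: walk_edge. }
{
  case: (ord_tri B w) => hBw.
  { (* v < C < B < w : crossing *)
    have evw : e v w by apply: (X v C B w) => //; lia.
    by apply: (fin v w (size ps) (size pt) 1) => //; exact: walk_edge. }
  { rewrite hBw in evB.
    by apply: (fin v w (size ps) (size pt) 1) => //; exact: walk_edge. }
  { (* nested2: v < C < w < B *)
    case: (ord_tri C s) => hCs; last first.
    { by exfalso; clear -hCs hls; lia. }
    { rewrite hCs in eCw.
      by apply: (fin s w 0 (size pt) 1) => //; [exact: walk0 | exact: walk_edge]. }
    have hl1' : last s ps <= C by rewrite hl1 ltnW.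
    have [a [c [i [/andP[h1 h1'] h2 h4 h5 h6]]]] := split_down hps hCs hl1'.
    case/andP: h4 => ha hc.
    have hat : a <= t := allP hall1 a ha.
    have hct : c <= t := allP hall1 c hc.
    have wsc := ext _ _ _ _ h5 h2.
    have isg : i.+1 <= sg by clear -h6 s1; lia.
    have eca : e c a by rewrite sym.
    case: (ord_tri c C) => hcC; last first.
    { by exfalso; clear -hcC h1'; lia. }
    { rewrite hcC in wsc.
      by apply: (fin C w i.+1 (size pt) 1) => //; exact: walk_edge. }
    case: (ord_tri a w) => haw.
    { have ecw : e c w by apply: (X c C a w).
      by apply: (fin c w i.+1 (size pt) 1) => //; exact: walk_edge. }
    { rewrite haw in eca.
      by apply: (fin c w i.+1 (size pt) 1) => //; exact: walk_edge. }
    case: (ord_tri a t) => hat'; last first.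
    { by exfalso; clear -hat' hat; lia. }
    { rewrite hat' in eca.
      by apply: (fin c t i.+1 0 1) => //; [exact: walk_edge | exact: walk0]. }
    have hl2' : last t pt <= a by rewrite hl2 ltnW.
    have [a2 [c2 [i2 [/andP[k1 k1'] k2 k4 k5 k6]]]] := split_down hpt hat' hl2'.
    case/andP: k4 => ka kc.
    have hsc2 : s <= c2 := allP hall2 c2 kc.
    case: (ord_tri c2 a) => hc2a; last first.
    { by exfalso; clear -hc2a k1'; lia. }
    { rewrite hc2a in k2.
      have hh : i2.+1 <= tu by clear -k6 t1; lia.
      by apply: (fin c a i.+1 i2.+1 1) => //; [exact: walk_edge | exact: ext k5 k2]. }
    have cc2 : c < c2 by clear -hcC hls hsc2; lia.
    have ec2a2 : e c2 a2 by rewrite sym.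
    have eca2 : e c a2 by apply: (X c c2 a a2).
    have hh : i2 <= tu by clear -k6 t1; lia.
    by apply: (fin c a2 i.+1 i2 1) => //; exact: walk_edge.
  } }
Qed.
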